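(* Let $I$ be an open interval, $h\in\mathbb{R}$, $\Delta:I\to(0,\infty)$ and $V:I\to\mathbb{C}$ smooth, and let $R$ be a $C^2$ solution of $\Delta^{-h}\frac{d}{dr}\left(\Delta^{h+1}\frac{dR}{dr}\right)=VR$ on $I$. Let $\alpha,\beta:I\to\mathbb{C}$ be smooth with $\beta$ nowhere zero, and suppose $$\gamma:=\alpha\left(\alpha+\beta'\Delta^{h+1}\right)-\beta\Delta^{h+1}\left(\alpha'+\beta\Delta^{h}V\right)$$ is nowhere zero on $I$ (primes denote $d/dr$). Define $\chi=\alpha R+\beta\Delta^{h+1}R'$. Then $$\Delta^{-h}\frac{d}{dr}\left(\Delta^{h+1}\chi'\right)-\Delta F\chi'-U\chi=0,$$ where $F=\gamma'/\gamma$ and $U=V+\frac{\Delta^{-h}}{\beta}\left[\left(2\alpha+\beta'\Delta^{h+1}\right)'-F\left(\alpha+\beta'\Delta^{h+1}\right)\right]$. Moreover $\gamma R=(\alpha+\beta'\Delta^{h+1})\chi-\beta\Delta^{h+1}\chi'$ and $\gamma R'=-(\alpha'+\beta\Delta^hV)\chi+\alpha\chi'$. *)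

(* Defs.v *)
From Stdlib Require Import Reals Lra.
Open Scope R_scope.

Definition Cx : Type := (R * R)%type.
Definition RtoC (x : R) : Cx := (x, 0).
Definition C0 : Cx := (0, 0).
Definition Cadd (z w : Cx) : Cx := (fst z + fst w, snd z + snd w).
Definition Copp (z : Cx) : Cx := (- fst z, - snd z).
Definition Csub (z w : Cx) : Cx := Cadd z (Copp w).
Definition Cmul (z w : Cx) : Cx :=
  (fst z * fst w - snd z * snd w, fst z * snd w + snd z * fst w).
Definition Cinv (z : Cx) : Cx :=
  let d := fst z * fst z + snd z * snd z in (fst z / d, - snd z / d).
Definition Cdiv (z w : Cx) : Cx := Cmul z (Cinv w).

Declare Scope C_scope.
Delimit Scope C_scope with C.
Infix "+" := Cadd : C_scope.
Infix "-" := Csub : C_scope.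
Infix "*" := Cmul : C_scope.
Infix "/" := Cdiv : C_scope.
Notation "- z" := (Copp z) : C_scope.

Definition in_I (lo hi : option R) (x : R) : Prop :=
  match lo with Some a => a < x | None => True end /\
  match hi with Some b => x < b | None => True end.

Definition cderiv (f : R -> Cx) (x : R) (l : Cx) : Prop :=
  derivable_pt_lim (fun s => fst (f s)) x (fst l) /\
  derivable_pt_lim (fun s => snd (f s)) x (snd l).

Definition ccont (f : R -> Cx) (x : R) : Prop :=
  continuity_pt (fun s => fst (f s)) x /\ continuity_pt (fun s => snd (f s)) x.

Definition smooth_on (I : R -> Prop) (f : R -> R) : Prop :=
  exists D : nat -> R -> R, (forall x, D 0%nat x = f x) /\
    forall (n : nat) (x : R), I x -> derivable_pt_lim (D n) x (D (S n) x).

Definition csmooth_on (I : R -> Prop) (f : R -> Cx) : Prop :=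
  smooth_on I (fun s => fst (f s)) /\ smooth_on I (fun s => snd (f s)).

Definition rpw (x p : R) : Cx := RtoC (Rpower x p).

(* Main.v *)
Require Import Defs.
From Stdlib Require Import Reals Lra Field FunctionalExtensionality ClassicalEpsilon Classical.
Open Scope R_scope.

Definition Cone : Cx := RtoC 1.

Lemma Cring : ring_theory C0 Cone Cadd Cmul Csub Copp (@eq Cx).
Proof.
  constructor; intros; repeat match goal with p : Cx |- _ => destruct p end;
  unfold C0, Cone, RtoC, Csub, Cadd, Cmul, Copp; simpl; f_equal; ring.
Qed.

Lemma Cfield : field_theory C0 Cone Cadd Cmul Csub Copp Cdiv Cinv (@eq Cx).
Proof.
  constructor.
  - exact Cring.
  - unfold Cone, C0, RtoC; intro H; inversion H; lra.
  - reflexivity.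
  - intros [a b] Hp. unfold Cinv, Cmul, Cone, RtoC; simpl.
    assert (a*a+b*b <> 0).
    { intro H. apply Hp. unfold C0. assert (a = 0) by nra. assert (b = 0) by nra. subst; reflexivity. }
    f_equal; field; auto.
Qed.

Add Field CxField : Cfield.

Lemma RtoC_mul x y : RtoC (x*y) = Cmul (RtoC x) (RtoC y).
Proof. unfold RtoC, Cmul; simpl; f_equal; ring. Qed.
Lemma RtoC_add x y : RtoC (x+y) = Cadd (RtoC x) (RtoC y).
Proof. unfold RtoC, Cadd; simpl; f_equal; ring. Qed.
Lemma RtoC_inv x : x <> 0 -> RtoC (/x) = Cinv (RtoC x).
Proof. intro. unfold RtoC, Cinv; simpl; f_equal; field; auto. Qed.
Lemma RtoC_nz x : x <> 0 -> RtoC x <> C0.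
Proof. intros H E; inversion E; auto. Qed.

Lemma dplus f g x a b : derivable_pt_lim f x a -> derivable_pt_lim g x b ->
  derivable_pt_lim (fun s => f s + g s) x (a + b).
Proof. intros; apply (derivable_pt_lim_plus f g); auto. Qed.
Lemma dminus f g x a b : derivable_pt_lim f x a -> derivable_pt_lim g x b ->
  derivable_pt_lim (fun s => f s - g s) x (a - b).
Proof. intros; apply (derivable_pt_lim_minus f g); auto. Qed.
Lemma dmult f g x a b : derivable_pt_lim f x a -> derivable_pt_lim g x b ->
  derivable_pt_lim (fun s => f s * g s) x (a * g x + f x * b).
Proof. intros; apply (derivable_pt_lim_mult f g); auto. Qed.
Lemma dopp f x a : derivable_pt_lim f x a -> derivable_pt_lim (fun s => - f s) x (- a).
Proof. intros; apply (derivable_pt_lim_opp f); auto. Qed.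
Lemma dconst c x : derivable_pt_lim (fun _ => c) x 0.
Proof. apply derivable_pt_lim_const. Qed.

Lemma cd_add f g x a b : cderiv f x a -> cderiv g x b ->
  cderiv (fun s => Cadd (f s) (g s)) x (Cadd a b).
Proof. intros [] []; split; simpl; apply dplus; auto. Qed.
Lemma cd_sub f g x a b : cderiv f x a -> cderiv g x b ->
  cderiv (fun s => Csub (f s) (g s)) x (Csub a b).
Proof. intros [] []; split; simpl; apply dplus; auto; apply dopp; auto. Qed.
Lemma cd_opp f x a : cderiv f x a -> cderiv (fun s => Copp (f s)) x (Copp a).
Proof. intros []; split; simpl; apply dopp; auto. Qed.
Lemma cd_mul f g x a b : cderiv f x a -> cderiv g x b ->
  cderiv (fun s => Cmul (f s) (g s)) x (Cadd (Cmul a (g x)) (Cmul (f x) b)).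
Proof.
  intros [H1 H2] [H3 H4]; split; simpl.
  - replace (fst a * fst (g x) - snd a * snd (g x) + (fst (f x) * fst b - snd (f x) * snd b))
      with ((fst a * fst (g x) + fst (f x) * fst b) - (snd a * snd (g x) + snd (f x) * snd b)) by ring.
    apply dminus; apply dmult; auto.
  - replace (fst a * snd (g x) + snd a * fst (g x) + (fst (f x) * snd b + snd (f x) * fst b))
      with ((fst a * snd (g x) + fst (f x) * snd b) + (snd a * fst (g x) + snd (f x) * fst b)) by ring.
    apply dplus; apply dmult; auto.
Qed.
Lemma cd_const c x : cderiv (fun _ => c) x C0.
Proof. split; simpl; apply dconst. Qed.
Lemma cd_real f x l : derivable_pt_lim f x l -> cderiv (fun s => RtoC (f s)) x (RtoC l).
Proof. intros; split; simpl; auto; apply dconst. Qed.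
Lemma cd_ext f g x l : (forall s, f s = g s) -> cderiv f x l -> cderiv g x l.
Proof. intros H; replace g with f; auto; apply functional_extensionality; auto. Qed.
Lemma cd_eql f x l l' : l = l' -> cderiv f x l -> cderiv f x l'.
Proof. intros; subst; auto. Qed.

Lemma rpw_deriv (D : R -> R) x d p : 0 < D x -> derivable_pt_lim D x d ->
  cderiv (fun s => rpw (D s) p) x (RtoC (p * Rpower (D x) (p - 1) * d)).
Proof.
  intros Hp Hd. unfold rpw. apply cd_real.
  replace (p * Rpower (D x) (p - 1) * d) with ((p * Rpower (D x) (p - 1)) * d) by ring.
  apply (derivable_pt_lim_comp D (fun y => Rpower y p)); auto.
  apply derivable_pt_lim_power; auto.
Qed.

Lemma in_I_nbhd lo hi x : in_I lo hi x -> exists a b, a < x < b /\ forall z, a < z < b -> in_I lo hi z.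
Proof.
  intros [H1 H2].
  exists (match lo with Some a => a | None => x - 1 end).
  exists (match hi with Some b => b | None => x + 1 end).
  split.
  - destruct lo, hi; split; lra.
  - intros z [Hz1 Hz2]; split; destruct lo, hi; simpl in *; auto.
Qed.

Lemma cd_loc lo hi f g x l : in_I lo hi x -> (forall s, in_I lo hi s -> g s = f s) ->
  cderiv g x l -> cderiv f x l.
Proof.
  intros Hx He [H1 H2]. destruct (in_I_nbhd lo hi x Hx) as (a & b & Hab & Hin).
  split; eapply derivable_pt_lim_locally_ext; eauto; intros z Hz; cbv beta; rewrite He; auto.
Qed.

Lemma smooth_d1 I f : smooth_on I f -> exists f1 f2 : R -> R,
  forall x, I x -> derivable_pt_lim f x (f1 x) /\ derivable_pt_lim f1 x (f2 x).
Proof.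
  intros (D & H0 & H). exists (D 1%nat), (D 2%nat). intros x Hx. split.
  - replace f with (D 0%nat) by (apply functional_extensionality; auto). auto.
  - auto.
Qed.

Lemma fchoice {A B : Type} (P : A -> B -> Prop) :
  (forall a, exists b, P a b) -> exists f : A -> B, forall a, P a (f a).
Proof.
  intros H. exists (fun a => proj1_sig (constructive_indefinite_description _ (H a))).
  intro a. exact (proj2_sig (constructive_indefinite_description _ (H a))).
Qed.

Lemma rpw_h1 D h : 0 < D -> rpw D (h+1) = Cmul (RtoC D) (rpw D h).
Proof. intros. unfold rpw. rewrite Rpower_plus, Rpower_1 by auto. rewrite RtoC_mul. field. Qed.
Lemma rpw_mh D h : rpw D (-h) = Cinv (rpw D h).
Proof. unfold rpw. rewrite Rpower_Ropp. apply RtoC_inv. unfold Rpower. apply Rgt_not_eq, exp_pos. Qed.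
Lemma rpw_nz D h : rpw D h <> C0.
Proof. apply RtoC_nz. unfold Rpower. apply Rgt_not_eq, exp_pos. Qed.
Lemma Rp_hm1 D h : 0 < D -> Rpower D (h - 1) = Rpower D h * / D.
Proof. intros. unfold Rminus. rewrite Rpower_plus, Rpower_Ropp, Rpower_1; auto. Qed.
Lemma Rp_h11 D h : Rpower D (h + 1 - 1) = Rpower D h.
Proof. f_equal; ring. Qed.

Lemma cuniq f x a b : cderiv f x a -> cderiv f x b -> a = b.
Proof.
  intros [H1 H2] [H3 H4]. destruct a, b; simpl in *.
  f_equal; eapply uniqueness_limite; eauto.
Qed.

Ltac dtac :=
  first [ eassumption
        | apply rpw_deriv; [assumption | eassumption]
        | apply cd_add; [dtac | dtac]
        | apply cd_sub; [dtac | dtac]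
        | apply cd_mul; [dtac | dtac]
        | apply cd_opp; dtac
        | apply cd_const ].

Theorem mainTheorem3
  (lo hi : option R)
  (Hlohi : match lo, hi with Some a, Some b => a < b | _, _ => True end)
  (h : R) (Delta : R -> R) (V : R -> Cx)
  (HDsm : smooth_on (in_I lo hi) Delta)
  (HDpos : forall r, in_I lo hi r -> 0 < Delta r)
  (HVsm : csmooth_on (in_I lo hi) V)
  (Rf R1 : R -> Cx)
  (HR1 : forall r, in_I lo hi r -> cderiv Rf r (R1 r))
  (HR2 : exists R2 : R -> Cx, forall r, in_I lo hi r -> cderiv R1 r (R2 r) /\ ccont R2 r)
  (Hode : forall r, in_I lo hi r -> exists G : Cx,
      cderiv (fun s => (rpw (Delta s) (h + 1) * R1 s)%C) r G /\
      (rpw (Delta r) (- h) * G)%C = (V r * Rf r)%C)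
  (alpha beta alpha1 beta1 : R -> Cx)
  (Hasm : csmooth_on (in_I lo hi) alpha)
  (Hbsm : csmooth_on (in_I lo hi) beta)
  (Ha1 : forall r, in_I lo hi r -> cderiv alpha r (alpha1 r))
  (Hb1 : forall r, in_I lo hi r -> cderiv beta r (beta1 r))
  (Hbnz : forall r, in_I lo hi r -> beta r <> C0) :
  let gamma := fun r =>
    (alpha r * (alpha r + beta1 r * rpw (Delta r) (h + 1))
     - beta r * rpw (Delta r) (h + 1)
         * (alpha1 r + beta r * rpw (Delta r) h * V r))%C in
  (forall r, in_I lo hi r -> gamma r <> C0) ->
  let chi := fun r => (alpha r * Rf r + beta r * rpw (Delta r) (h + 1) * R1 r)%C in
  exists (chi1 G gamma1 W : R -> Cx),
    (forall r, in_I lo hi r -> cderiv chi r (chi1 r)) /\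
    (forall r, in_I lo hi r ->
       cderiv (fun s => (rpw (Delta s) (h + 1) * chi1 s)%C) r (G r)) /\
    (forall r, in_I lo hi r -> cderiv gamma r (gamma1 r)) /\
    (forall r, in_I lo hi r ->
       cderiv (fun s => (RtoC 2 * alpha s + beta1 s * rpw (Delta s) (h + 1))%C) r (W r)) /\
    (forall r, in_I lo hi r ->
       let F := (gamma1 r / gamma r)%C in
       let U := (V r + rpw (Delta r) (- h) / beta r
                   * (W r - F * (alpha r + beta1 r * rpw (Delta r) (h + 1))))%C in
       (rpw (Delta r) (- h) * G r - RtoC (Delta r) * F * chi1 r - U * chi r)%C = C0 /\
       (gamma r * Rf r)%C =
         ((alpha r + beta1 r * rpw (Delta r) (h + 1)) * chi r
          - beta r * rpw (Delta r) (h + 1) * chi1 r)%C /\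
       (gamma r * R1 r)%C =
         (- (alpha1 r + beta r * rpw (Delta r) h * V r) * chi r + alpha r * chi1 r)%C).
Proof.

  intros gamma Hgnz chi.
  destruct (smooth_d1 _ _ HDsm) as (d1 & d2 & Hd).
  destruct HVsm as [HV1 HV2].
  destruct (smooth_d1 _ _ HV1) as (v1 & v1' & Hv1).
  destruct (smooth_d1 _ _ HV2) as (v2 & v2' & Hv2).
  destruct Hasm as [Ha1s Ha2s].
  destruct (smooth_d1 _ _ Ha1s) as (fa1 & fa1' & Hfa1).
  destruct (smooth_d1 _ _ Ha2s) as (fa2 & fa2' & Hfa2).
  destruct Hbsm as [Hb1s Hb2s].
  destruct (smooth_d1 _ _ Hb1s) as (fb1 & fb1' & Hfb1).
  destruct (smooth_d1 _ _ Hb2s) as (fb2 & fb2' & Hfb2).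
  clear HR2.
  assert (HVd : forall r, in_I lo hi r -> cderiv V r (v1 r, v2 r)).
  { intros r Hr; split; simpl; [apply Hv1 | apply Hv2]; auto. }
  assert (Ha1d : forall r, in_I lo hi r -> cderiv alpha1 r (fa1' r, fa2' r)).
  { intros r Hr. apply (cd_loc lo hi) with (g := fun s => (fa1 s, fa2 s)); auto.
    - intros s Hs. destruct (Ha1 s Hs) as [E1 E2].
      destruct (alpha1 s) as [x y] eqn:E; simpl in *. f_equal;
      eapply uniqueness_limite; eauto; [apply Hfa1 | apply Hfa2]; auto.
    - split; simpl; [apply Hfa1 | apply Hfa2]; auto. }
  assert (Hb1d : forall r, in_I lo hi r -> cderiv beta1 r (fb1' r, fb2' r)).
  { intros r Hr. apply (cd_loc lo hi) with (g := fun s => (fb1 s, fb2 s)); auto.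
    - intros s Hs. destruct (Hb1 s Hs) as [E1 E2].
      destruct (beta1 s) as [x y] eqn:E; simpl in *. f_equal;
      eapply uniqueness_limite; eauto; [apply Hfb1 | apply Hfb2]; auto.
    - split; simpl; [apply Hfb1 | apply Hfb2]; auto. }
  assert (HDd : forall r, in_I lo hi r -> derivable_pt_lim Delta r (d1 r)).
  { intros r Hr; apply Hd; auto. }
  clear Hd Hv1 Hv2 Hfa1 Hfa2 Hfb1 Hfb2 HV1 HV2 Ha1s Ha2s Hb1s Hb2s HDsm.
  set (chi1 := fun s => (alpha1 s * Rf s + alpha s * R1 s
      + beta1 s * rpw (Delta s) (h + 1) * R1 s + beta s * rpw (Delta s) h * V s * Rf s)%C).

  assert (HG0e : forall r, in_I lo hi r -> exists G0, cderiv (fun s => (rpw (Delta s) (h + 1) * R1 s)%C) r G0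
             /\ G0 = (rpw (Delta r) h * (V r * Rf r))%C).
  { intros r Hr. destruct (Hode r Hr) as (G0 & HG0 & EG0). exists G0; split; auto.
    rewrite rpw_mh in EG0. rewrite <- EG0. field. apply rpw_nz. }
  clear Hode.
  assert (Hchi : forall r, in_I lo hi r -> cderiv chi r (chi1 r)).
  { intros r Hr. destruct (HG0e r Hr) as (G0 & HG0 & EG0).
    specialize (HR1 r Hr). specialize (Ha1 r Hr). specialize (Hb1 r Hr).
    apply cd_ext with (f := fun s => (alpha s * Rf s + beta s * (rpw (Delta s) (h+1) * R1 s))%C).
    { intros; unfold chi; ring. }
    eapply cd_eql; [| dtac].
    unfold chi1; rewrite EG0; ring. }
  assert (Hex : forall r, exists t : Cx * Cx * Cx, in_I lo hi r ->
     cderiv (fun s => (rpw (Delta s) (h + 1) * chi1 s)%C) r (fst (fst t)) /\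
     cderiv gamma r (snd (fst t)) /\
     cderiv (fun s => (RtoC 2 * alpha s + beta1 s * rpw (Delta s) (h + 1))%C) r (snd t)).
  { intros r. destruct (classic (in_I lo hi r)) as [Hr | Hr]; [| exists (C0, C0, C0); tauto].
    destruct (HG0e r Hr) as (G0 & HG0 & EG0).
    specialize (HR1 r Hr). specialize (Ha1 r Hr). specialize (Hb1 r Hr).
    specialize (Ha1d r Hr). specialize (Hb1d r Hr). specialize (HVd r Hr). specialize (HDd r Hr).
    specialize (HDpos r Hr).
    evar (G : Cx). evar (g1 : Cx). evar (W : Cx).
    assert (HG : cderiv (fun s => (rpw (Delta s) (h + 1) * chi1 s)%C) r G).
    { apply cd_ext with (f := fun s => ((rpw (Delta s) (h + 1) * alpha1 s) * Rf s
         + (alpha s + beta1 s * rpw (Delta s) (h + 1)) * (rpw (Delta s) (h + 1) * R1 s)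
         + (beta s * rpw (Delta s) h * rpw (Delta s) (h + 1) * V s) * Rf s)%C).
      { intros; unfold chi1; ring. }
      dtac. }
    assert (Hg : cderiv gamma r g1). { unfold gamma. dtac. }
    assert (HW : cderiv (fun s => (RtoC 2 * alpha s + beta1 s * rpw (Delta s) (h + 1))%C) r W).
    { dtac. }
    exists (G, g1, W). intros _. simpl. auto. }

  destruct (fchoice _ Hex) as (T & HT).
  exists chi1, (fun r => fst (fst (T r))), (fun r => snd (fst (T r))), (fun r => snd (T r)).
  split; [exact Hchi|]. split; [intros r Hr; apply (HT r Hr)|].
  split; [intros r Hr; apply (HT r Hr)|]. split; [intros r Hr; apply (HT r Hr)|].
  intros r Hr. destruct (HT r Hr) as (HGa & Hga & HWa).
  cbv beta.
  destruct (HG0e r Hr) as (G0 & HG0 & EG0).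
  specialize (HR1 r Hr). specialize (Ha1 r Hr). specialize (Hb1 r Hr).
  specialize (Ha1d r Hr). specialize (Hb1d r Hr). specialize (HVd r Hr). specialize (HDd r Hr).
  specialize (HDpos r Hr). specialize (Hgnz r Hr). specialize (Hbnz r Hr).
  evar (G : Cx). evar (g1 : Cx). evar (W : Cx).
  assert (HG : cderiv (fun s => (rpw (Delta s) (h + 1) * chi1 s)%C) r G).
  { apply cd_ext with (f := fun s => ((rpw (Delta s) (h + 1) * alpha1 s) * Rf s
       + (alpha s + beta1 s * rpw (Delta s) (h + 1)) * (rpw (Delta s) (h + 1) * R1 s)
       + (beta s * rpw (Delta s) h * rpw (Delta s) (h + 1) * V s) * Rf s)%C).
    { intros; unfold chi1; ring. }
    dtac. }
  assert (Hg : cderiv gamma r g1). { unfold gamma. dtac. }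
  assert (HW : cderiv (fun s => (RtoC 2 * alpha s + beta1 s * rpw (Delta s) (h + 1))%C) r W).
  { dtac. }
  rewrite (cuniq _ _ _ _ HGa HG), (cuniq _ _ _ _ Hga Hg), (cuniq _ _ _ _ HWa HW).
  subst G g1 W. rewrite EG0. unfold chi, chi1. unfold gamma in *.
  rewrite !Rp_h11, !Rp_hm1 by auto.
  rewrite !rpw_mh, !rpw_h1 in * by auto.
  rewrite !RtoC_mul, !RtoC_add in *.
  rewrite RtoC_inv by lra.
  assert (HDn : RtoC (Delta r) <> C0) by (apply RtoC_nz; lra).
  assert (Hqn := rpw_nz (Delta r) h).
  unfold rpw in *.
  set (q := RtoC (Rpower (Delta r) h)) in *.
  set (DD := RtoC (Delta r)) in *.
  replace (RtoC 2) with (Cadd Cone Cone) by (unfold Cone, RtoC, Cadd; simpl; f_equal; ring).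
  fold Cone.
  fold (RtoC 1). fold Cone.
  split; [| split]; [field|field|field].
  all: repeat split; auto.
Qed.
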